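(* Consider the family of distributions on $[0,1]$ with densities, with respect to the measure $\lambda+\delta_0+\delta_1$ (where $\lambda$ is Lebesgue measure and $\delta_c$ is the point mass at $c$), $$\mathrm{beinf}(y;\alpha,\gamma,\mu,\phi)=\begin{cases}\alpha(1-\gamma), & y=0,\\ \alpha\gamma, & y=1,\\ (1-\alpha)f(y;\mu,\phi), & y\in(0,1),\end{cases}$$ indexed by $(\alpha,\gamma,\mu,\phi)\in(0,1)\times(0,1)\times(0,1)\times(0,\infty)$, where $$f(y;\mu,\phi)=\frac{\Gamma(\phi)}{\Gamma(\mu\phi)\Gamma((1-\mu)\phi)}\,y^{\mu\phi-1}(1-y)^{(1-\mu)\phi-1},\quad y\in(0,1),$$ is the beta density with mean $\mu$ and precision $\phi$ (the zero-and-one-inflated beta distribution $\mathrm{BEINF}(\alpha,\gamma,\mu,\phi)$). Then this family is a four-parameter exponential family of full rank.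
   Context: A family of densities $\{p_\theta:\theta\in\Theta\}$ with respect to a measure $\nu$ on a space $\mathcal Y$ is called a $k$-parameter exponential family of full rank if there are a one-to-one map $\theta\mapsto\eta(\theta)\in\mathbb R^k$, a statistic $T=(t_1,\dots,t_k):\mathcal Y\to\mathbb R^k$, a real function $B^*$ and a positive function $h$ on $\mathcal Y$ such that $p_\theta(y)=\exp\{\eta(\theta)^\top T(y)-B^*(\eta(\theta))\}h(y)$ for all $y$ and $\theta$, where neither the components $t_1,\dots,t_k$ nor the components of $\eta$ satisfy a linear constraint, and the set $\{\eta(\theta):\theta\in\Theta\}$ contains a $k$-dimensional open rectangle. *)

(* Defs.v *)
From HB Require Import structures.
From mathcomp Require Import all_boot all_order all_algebra.
From mathcomp Require Import all_classical all_reals all_analysis.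
Set Implicit Arguments. Unset Strict Implicit. Unset Printing Implicit Defensive.
Import Order.TTheory GRing.Theory Num.Theory.
Import numFieldNormedType.Exports.
Local Open Scope classical_set_scope.
Local Open Scope ring_scope.

Definition Gamma (R : realType) (s : R) : R :=
  fine (\int[@lebesgue_measure R]_(x in `]0%R, +oo[) ((x `^ (s - 1)) * expR (- x))%:E)%E.

Definition beta_dens (R : realType) (y mu phi : R) : R :=
  Gamma phi / (Gamma (mu * phi) * Gamma ((1 - mu) * phi))
  * y `^ (mu * phi - 1) * (1 - y) `^ ((1 - mu) * phi - 1).

Definition beinf_param_space (R : realType) : set (R * R * R * R) :=
  [set th | let: (a, g, m, p) := th in
     [/\ 0 < a < 1, 0 < g < 1, 0 < m < 1 & 0 < p]].

(* BEINF density w.r.t. lambda + delta_0 + delta_1 on [0,1]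
   (value outside [0,1] irrelevant; set to 0). *)
Definition beinf (R : realType) (y : R) (th : R * R * R * R) : R :=
  let: (a, g, m, p) := th in
  if y == 0 then a * (1 - g)
  else if y == 1 then a * g
  else if (0 < y) && (y < 1) then (1 - a) * beta_dens y m p
  else 0.

(* The dominating measure nu = lambda + delta_0 + delta_1 on R (the family
   lives on [0,1]). *)
Definition nu (R : realType) : {measure set (measurableTypeR R) -> \bar R} :=
  measure_add (measure_add (@lebesgue_measure R)
    (@dirac _ (measurableTypeR R) 0%R R)) (@dirac _ (measurableTypeR R) 1%R R).

Definition dotv (R : realType) (k : nat) (u v : 'I_k -> R) : R :=
  \sum_(i < k) u i * v i.

(* k-parameter exponential family of full rank (densities p_theta w.r.t. a
   measure nu on the space Ysp, parameter set Th). "No linear constraint" on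
   T is understood nu-almost everywhere on Ysp; on eta, over all of Th. *)
Definition exp_family_full_rank (R : realType) (d : measure_display)
  (Y : measurableType d) (nu0 : {measure set Y -> \bar R}) (Ysp : set Y)
  (Theta : Type) (Th : set Theta) (p : Theta -> Y -> R) (k : nat) : Prop :=
  exists (eta : Theta -> 'I_k -> R) (T : Y -> 'I_k -> R)
         (Bstar : ('I_k -> R) -> R) (h : Y -> R),
  (forall t1 t2, Th t1 -> Th t2 -> eta t1 = eta t2 -> t1 = t2) /\
      (forall y, Ysp y -> 0 < h y) /\
      (forall th y, Th th -> Ysp y ->
          p th y = expR (dotv (eta th) (T y) - Bstar (eta th)) * h y) /\
      (forall (a : 'I_k -> R) (c : R),
          {ae nu0, forall y, Ysp y -> dotv a (T y) = c} -> a = (fun=> 0)) /\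
      (forall (a : 'I_k -> R) (c : R),
          (forall th, Th th -> dotv a (eta th) = c) -> a = (fun=> 0)) /\
      (exists lo hi : 'I_k -> R, (forall i, lo i < hi i) /\
          (forall x : 'I_k -> R, (forall i, lo i < x i < hi i) ->
             exists2 th, Th th & eta th = x)).

(* Main.v *)
Require Import Defs.
From HB Require Import structures.
From mathcomp Require Import all_boot all_order all_algebra.
From mathcomp Require Import all_classical all_reals all_analysis.
From mathcomp Require Import ring lra measurable_realfun.
Set Implicit Arguments. Unset Strict Implicit. Unset Printing Implicit Defensive.
Import Order.TTheory GRing.Theory Num.Theory.
Import numFieldNormedType.Exports.
Local Open Scope classical_set_scope.
Local Open Scope ring_scope.

Section gamma.
Context {R : realType}.
Notation mu := (@lebesgue_measure R).

Lemma derivable_powR1 (x r : R) : 0 < x -> derivable (@powR R ^~ r) x 1.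
Proof. by move=> x0; apply: (@derivable_powR R 1 r); rewrite in_itv/= andbT. Qed.

Lemma powR_cont (x r : R) : 0 < x -> {for x, continuous (@powR R ^~ r)}.
Proof.
move=> x0; apply/differentiable_continuous; rewrite -derivable1_diffP.
exact: derivable_powR1.
Qed.

Lemma int_pow_seg (s a : R) : 0 < s -> 0 < a < 1 ->
  (\int[mu]_(x in `[a, 1%R]) (x `^ (s - 1))%:E =
    (s^-1 * 1 `^ s)%:E - (s^-1 * a `^ s)%:E)%E.
Proof.
move=> s0 /andP[a0 a1].
apply: (@continuous_FTC2 R (@powR R ^~ (s - 1)) (fun x => s^-1 * x `^ s)) => //.
- apply: derivable_within_continuous => x; rewrite in_itv/= => /andP[ax _].
  exact: derivable_powR1 (lt_le_trans a0 ax).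
- have dF x : 0 < x -> derivable (fun x => s^-1 * x `^ s) x 1.
    by move=> x0; apply: derivableM => //; exact: derivable_powR1.
  have cF x : 0 < x -> {for x, continuous (fun x => s^-1 * x `^ s)}.
    move=> x0; apply/differentiable_continuous; rewrite -derivable1_diffP.
    exact: dF.
  split.
  + move=> x; rewrite in_itv/= => /andP[ax _]; apply: dF.
    exact: lt_trans ax.
  + exact/cvg_at_right_filter/cF.
  + exact/cvg_at_left_filter/cF.
- move=> x; rewrite in_itv/= => /andP[ax _].
  have x0 : 0 < x by exact: lt_trans ax.
  rewrite derive1Ml; last exact: derivable_powR1.
  rewrite powR_derive1 ?in_itv/= ?andbT// mulrA mulVf ?mul1r//.
  by rewrite gt_eqF.
Qed.


Lemma int_pow_01 (s : R) : 0 < s ->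
  (\int[mu]_(x in `]0%R, 1%R]) (x `^ (s - 1))%:E <= (s^-1)%:E)%E.
Proof.
move=> s0.
pose F (n : nat) : set R := [set` `[(n.+2%:R)^-1, 1%R]].
have nd : {homo F : n m / (n <= m)%N >-> (n <= m)%O}.
  move=> n m nm; apply/subsetPset => x; rewrite /F /= !in_itv/= => /andP[h1 ->].
  rewrite andbT; apply: le_trans h1.
  by rewrite lef_pV2 ?posrE ?ltr0n// ler_nat ltnS.
have mF i : measurable (F i) by exact: measurable_itv.
have mf i : measurable_fun (F i) (EFin \o (fun x : R => x `^ (s - 1))).
  apply/measurable_EFinP; apply: measurable_funTS; exact: measurable_powR.
have f0 i x : F i x -> (0 <= (x `^ (s - 1))%:E)%E.
  by move=> _; rewrite lee_fin powR_ge0.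
have HL := @ge0_nondecreasing_set_cvg_integral _ _ _ _ _ mu nd mF mf f0.
have BU : \bigcup_i F i = [set` `]0%R, 1%R]].
  apply/seteqP; split => x /=.
    move=> [n _]; rewrite /F /= !in_itv/= => /andP[h1 ->]; rewrite andbT.
    by apply: lt_le_trans h1; rewrite invr_gt0 ltr0n.
  rewrite in_itv/= => /andP[x0 x1].
  exists (Num.truncn x^-1) => //; rewrite /F /= in_itv/= x1 andbT.
  rewrite -[x in (_ <= x)]invrK lef_pV2 ?posrE ?ltr0n ?invr_gt0//.
  apply: ltW; apply: lt_le_trans (truncnS_gt _) _.
  by rewrite ler_nat.
rewrite -BU -(cvg_lim _ HL) //.
apply: lime_le; first exact: cvgP HL.
apply: nearW => n.
have a01 : 0 < (n.+2%:R : R)^-1 < 1.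
  by rewrite invr_gt0 ltr0n /= invf_lt1 ?ltr0n// ltr1n.
rewrite /F int_pow_seg// powR1 mulr1 -EFinB lee_fin.
have : 0 <= s^-1 * (n.+2%:R)^-1 `^ s by rewrite mulr_ge0 ?invr_ge0 ?ltW ?powR_ge0.
lra.
Qed.


Lemma pow_exp_bound (s : R) : exists K : R, 0 <= K /\
  forall x, 1 <= x -> x `^ (s - 1) * expR (- x) <= K * expR (- x / 2).
Proof.
pose N := Num.truncn s.
exists (2 ^+ N.+1 * (N.+1)`!%:R); split.
  by rewrite mulr_ge0 ?exprn_ge0 ?ler0n.
move=> x x1.
have x0 : 0 <= x by apply: le_trans x1.
have h1 : x `^ (s - 1) <= x ^+ N.
  rewrite -powR_mulrn//; apply: ler_powR => //.
  have := truncnS_gt s; rewrite -/N -addn1 natrD; lra.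
have h2 : x ^+ N <= x ^+ N.+1.
  by rewrite exprS ler_peMl ?exprn_ge0.
have h3 : x ^+ N.+1 = 2 ^+ N.+1 * (x / 2) ^+ N.+1.
  by rewrite -exprMn; congr (_ ^+ _); field.
have h4 : (x / 2) ^+ N.+1 <= (N.+1)`!%:R * expR (x / 2).
  have := expR_ge1Dxn N (_ : 0 <= x / 2); move=> /(_ ltac:(lra)).
  have fpos : 0 < (N.+1)`!%:R :> R by rewrite ltr0n fact_gt0.
  move=> H; rewrite -ler_pdivrMl//.
  rewrite mulrC; apply: le_trans H; lra.
have e : expR (- x / 2) = expR (x / 2) * expR (- x).
  by rewrite -expRD; congr expR; lra.
rewrite e mulrA ler_wpM2r ?expR_ge0//.
apply: le_trans h1 _; apply: le_trans h2 _.
by rewrite h3 -mulrA ler_wpM2l ?exprn_ge0.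
Qed.


Definition gf (s : R) (x : R) : R := x `^ (s - 1) * expR (- x).

Lemma measurable_gf s : measurable_fun setT (gf s).
Proof.
apply: measurable_funM; first exact: measurable_powR.
apply: measurableT_comp; first exact: measurable_expR.
exact: oppr_measurable.
Qed.

Lemma measurable_gfE s (A : set R) : measurable_fun A (EFin \o gf s).
Proof. by apply/measurable_EFinP; apply: measurable_funTS; exact: measurable_gf. Qed.

Lemma gf_ge0 s x : 0 <= gf s x.
Proof. by rewrite mulr_ge0 ?powR_ge0 ?expR_ge0. Qed.

Lemma int_tail s :
  (\int[mu]_(x in `]1%R, +oo[) (gf s x)%:E < +oo)%E.
Proof.
have [K [K0 HK]] := pow_exp_bound s.
have h2 : (0 : R) <= 2^-1 by rewrite invr_ge0 ler0n.
apply: (@le_lt_trans _ _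
   (\int[mu]_(x in `]1%R, +oo[) ((2 * K)%:E * (exponential_pdf 2^-1 x)%:E))%E).
  apply: ge0_le_integral => //.
  - by move=> x _; rewrite lee_fin gf_ge0.
  - exact: measurable_gfE.
  - apply: emeasurable_funM; first exact: measurable_cst.
    apply/measurable_EFinP; apply: measurable_funTS.
    exact: measurable_exponential_pdf.
  - move=> x; rewrite /= in_itv/= andbT => x1.
    rewrite -EFinM lee_fin exponential_pdfE ?(ltW (lt_trans ltr01 x1))//.
    apply: le_trans (HK x (ltW x1)) _.
    rewrite (_ : - 2^-1 * x = - x / 2); last by lra.
    by rewrite [X in _ <= X](_ : _ = K * expR (- x / 2)) //; field.
rewrite ge0_integralZl_EFin//; last 3 first.
- by move=> x _; rewrite lee_fin exponential_pdf_ge0.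
- apply/measurable_EFinP; apply: measurable_funTS.
  exact: measurable_exponential_pdf.
- by rewrite mulr_ge0.
apply: (@le_lt_trans _ _ ((2 * K)%:E * 1)%E); last by rewrite mule1 ltry.
apply: lee_wpmul2l; first by rewrite lee_fin mulr_ge0.
rewrite -(integral_exponential_pdf (_ : (0:R) < 2^-1)); last by rewrite invr_gt0 ltr0n.
apply: ge0_subset_integral => //.
- apply/measurable_EFinP; exact: measurable_exponential_pdf.
- by move=> x _; rewrite lee_fin exponential_pdf_ge0.
Qed.


Lemma gf_lb (s x : R) : 1 <= x <= 2 -> expR (- `|s - 1|) * expR (-2) <= gf s x.
Proof.
move=> /andP[x1 x2].
have x0 : 0 < x by apply: lt_le_trans x1.
have l0 : 0 <= ln x by rewrite ln_ge0.
have l1 : ln x <= 1.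
  have := @le_ln1Dx R (x - 1) ltac:(lra); rewrite addrC subrK; lra.
rewrite /gf /powR gt_eqF//.
apply: ler_pM; rewrite ?expR_ge0// ler_expR; last by lra.
have a0 : 0 <= `|s - 1| by [].
have h' : - `|s - 1| <= s - 1 by rewrite lerNl -normrN ler_norm.
nra.
Qed.

Lemma Gamma_gt0 (s : R) : 0 < s -> 0 < Gamma s.
Proof.
move=> s0; rewrite /Gamma.
have -> : (fun x => ((x `^ (s - 1)) * expR (- x))%:E) = (EFin \o gf s) by [].
set I := (\int[mu]_(x in _) _)%E.
have Ifin : (I < +oo)%E.
  rewrite /I (@itv_bndbnd_setU _ _ (BRight 0%R) (BRight 1%R) (BInfty _ false));
    rewrite ?bnd_simp//.
  rewrite ge0_integral_setU //=; last 3 first.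
  - exact: measurable_gfE.
  - by move=> x _; rewrite lee_fin gf_ge0.
  - apply/disj_setPS => x [] /=; rewrite !in_itv/= andbT => /andP[_ h1] h2.
    by move: (lt_le_trans h2 h1); rewrite ltxx.
  apply: lte_add_pinfty; last exact: int_tail.
  apply: (@le_lt_trans _ _ (s^-1)%:E); last exact: ltry.
  apply: le_trans (int_pow_01 s0).
  apply: ge0_le_integral => //.
  - by move=> x _; rewrite lee_fin gf_ge0.
  - exact: measurable_gfE.
  - apply/measurable_EFinP; apply: measurable_funTS; exact: measurable_powR.
  - move=> x; rewrite /= in_itv/= => /andP[x0 _]; rewrite lee_fin /gf.
    rewrite ler_piMr ?powR_ge0// expR_le1; lra.
set c := expR (- `|s - 1|) * expR (-2).
have c0 : 0 < c by rewrite mulr_gt0 ?expR_gt0.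
have Ilb : (c%:E <= I)%E.
  apply: (@le_trans _ _ (\int[mu]_(x in `[1%R, 2%R]) (EFin \o gf s) x)%E); last first.
    apply: ge0_subset_integral => //.
    - exact: measurable_gfE.
    - by move=> x _; rewrite lee_fin gf_ge0.
    - move=> x; rewrite /= !in_itv/= andbT => /andP[x1 _]; lra.
  apply: (@le_trans _ _ (\int[mu]_(x in `[1%R, 2%R]) (cst c%:E) x)%E).
    rewrite integral_cst// /= lebesgue_measure_itv/= lte_fin ifT; last by lra.
    by rewrite -EFinD -EFinM lee_fin (_ : 2 + -1 = 1 :> R) ?mulr1//; lra.
  apply: ge0_le_integral => //.
  - by move=> x _; rewrite lee_fin ltW.
  - exact: measurable_gfE.
  - by move=> x; rewrite /= in_itv/= => h; rewrite lee_fin gf_lb.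
apply: fine_gt0; rewrite Ifin andbT.
by apply: lt_le_trans Ilb; rewrite lte_fin.
Qed.

End gamma.
Section ae.
Context {R : realType}.

Lemma ae_nu_01 (f : R -> R) (c : R) :
  {ae @nu R, forall y, [set` `[0%R, 1%R]] y -> f y = c} ->
  [/\ f 0 = c, f 1 = c &
   forall y0, 0 < y0 < 1 -> forall gg : R -> R, {for y0, continuous gg} ->
     (forall y, 0 < y < 1 -> f y = gg y) -> gg y0 = c].
Proof.
move=> [A [mA nuA sub]].
move: nuA; rewrite /nu /= /msum !big_ord_recl big_ord0 /= adde0 /msum !big_ord_recl big_ord0 /= adde0 => /eqP.
rewrite padde_eq0 ?measure_ge0 ?adde_ge0 ?measure_ge0// => /andP[].
rewrite padde_eq0 ?measure_ge0// => /andP[/eqP lA /eqP d0] /eqP d1.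
move: d0 d1; rewrite !diracE => d0 d1.
have notA y : [set` `[0%R, 1%R]] y -> ~ A y -> f y = c.
  move=> y01 nAy; apply: contrapT => nf; apply: nAy; apply: sub => /=.
  by move=> /(_ y01).
split.
- apply: notA; first by rewrite /= in_itv/= lexx ler01.
  by move=> A0; move: d0; rewrite mem_set// => /eqP; rewrite eqe (_ : true%:R = 1 :> R)// oner_eq0.
- apply: notA; first by rewrite /= in_itv/= lexx ler01.
  by move=> A1; move: d1; rewrite mem_set// => /eqP; rewrite eqe (_ : true%:R = 1 :> R)// oner_eq0.
move=> y0 /andP[y00 y01] gg cf fg; apply: contrapT => /eqP nf.
have e0 : 0 < `|gg y0 - c| by rewrite normr_gt0 subr_eq0.
have /cvgrPdist_lt/(_ _ e0) Hn := cf.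
have Hn2 : \forall y \near y0, 0 < y < 1.
  near=> y; apply/andP; split; near: y; [exact: lt_nbhsr | exact: lt_nbhsl].
have [e e0' Hb] := proj1 (nbhs_ballP _ _) (filterI Hn Hn2).
have sub2 : [set` `]y0 - e, y0 + e[] `<=` A.
  move=> y; rewrite -ball_itv => /Hb [/= h1 /andP[ya yb]].
  apply: sub => /= /(_ _) H.
  have : f y = c by apply: H; rewrite in_itv/= !ltW.
  move=> fy; have gy : gg y = c by rewrite -fg ?ya ?yb.
  by move: h1; rewrite gy ltxx.
have mI : [set` `]y0 - e, y0 + e[] \in measurable by rewrite inE; exact: measurable_itv.
have mA' : A \in measurable by rewrite inE.
have H := le_measure lebesgue_measure mI mA' sub2.
have lA2 : (lebesgue_measure A <= 0)%E by rewrite lA.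
have := le_trans H lA2.
rewrite /= lebesgue_measure_itv/= lte_fin.
have e1 : 0 < e := e0'.
rewrite ifT; last lra.
rewrite -EFinD lee_fin; lra.
Unshelve. all: by end_near.
Qed.
End ae.

Section main.
Context {R : realType}.
Implicit Types (th : R * R * R * R).

Definition Cf (m p : R) : R := Gamma p / (Gamma (m * p) * Gamma ((1 - m) * p)).

Lemma Cf_gt0 (m p : R) : 0 < m < 1 -> 0 < p -> 0 < Cf m p.
Proof.
move=> /andP[m0 m1] p0; have m1' : 0 < 1 - m by rewrite subr_gt0.
by rewrite /Cf; apply: divr_gt0; [|apply: mulr_gt0]; apply: Gamma_gt0;
  rewrite ?mulr_gt0.
Qed.

Definition LB th : R := let: (a, g, m, p) := th in ln ((1 - a) * Cf m p).

Definition eta th : 'I_4 -> R := let: (a, g, m, p) := th in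
  fun i => nth 0 [:: ln (a * (1 - g)) - ln ((1 - a) * Cf m p);
                     ln (a * g) - ln ((1 - a) * Cf m p); m * p; (1 - m) * p] (val i).

Definition Tst (y : R) : 'I_4 -> R :=
  fun i => nth 0 [:: (y == 0)%:R; (y == 1)%:R; ln y; ln (1 - y)] (val i).

Definition hh (y : R) : R := expR (- ln y - ln (1 - y)).

Lemma dot4 (u v : 'I_4 -> R) : dotv u v =
  u (inord 0) * v (inord 0) + u (inord 1) * v (inord 1) +
  u (inord 2) * v (inord 2) + u (inord 3) * v (inord 3).
Proof.
rewrite /dotv !big_ord_recl big_ord0 addr0 !addrA.
by congr (u _ * v _ + u _ * v _ + u _ * v _ + u _ * v _);
  apply/val_inj; rewrite /= inordK.
Qed.

Lemma nth_inord (l : seq R) k : (k < 4)%N -> nth 0 l (val (inord k : 'I_4)) = nth 0 l k.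
Proof. by move=> k4; rewrite /= inordK. Qed.

Lemma eq4 (u v : 'I_4 -> R) : (forall k, (k < 4)%N -> u (inord k) = v (inord k)) -> u = v.
Proof.
move=> H; apply/funext => i.
have -> : i = inord (val i) by rewrite inord_val.
exact: (H _ (ltn_ord i)).

Qed.

Lemma expR_lnB (A B : R) : 0 < A -> 0 < B -> expR (ln A - ln B) = A / B.
Proof. by move=> A0 B0; rewrite expRD expRN !lnK ?posrE. Qed.

Lemma eta_inj t1 t2 : beinf_param_space t1 -> beinf_param_space t2 ->
  eta t1 = eta t2 -> t1 = t2.
Proof.
case: t1 => [[[a g] m] p]; case: t2 => [[[a' g'] m'] p'].
move=> [/andP[a0 a1] /andP[g0 g1] /andP[m0 m1] p0].
move=> [/andP[a0' a1'] /andP[g0' g1'] /andP[m0' m1'] p0'] E.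
have E0 := congr1 (fun f => f (inord 0)) E.
have E1 := congr1 (fun f => f (inord 1)) E.
have E2 := congr1 (fun f => f (inord 2)) E.
have E3 := congr1 (fun f => f (inord 3)) E.
move: E0 E1 E2 E3; rewrite /eta !nth_inord //= => E0 E1 E2 E3.
have pp : p = p' by lra.
subst p'.
have mm : m = m'.
  by apply: (mulIf (lt0r_neq0 p0)).
subst m'.
have C0 := Cf_gt0 (m:=m) (p:=p) ltac:(lra) p0.
set C := Cf m p in E0 E1 C0.
have X1 := congr1 expR E0; have X2 := congr1 expR E1.
have P1 : 0 < (1 - a) * C by rewrite mulr_gt0 ?subr_gt0.
have P2 : 0 < (1 - a') * C by rewrite mulr_gt0 ?subr_gt0.
have Q1 : 0 < a * (1 - g) by rewrite mulr_gt0 ?subr_gt0.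
have Q2 : 0 < a' * (1 - g') by rewrite mulr_gt0 ?subr_gt0.
have Q3 : 0 < a * g by rewrite mulr_gt0.
have Q4 : 0 < a' * g' by rewrite mulr_gt0.
rewrite !expR_lnB // in X1 X2.
move/eqP: X1; rewrite eqr_div ?lt0r_neq0// => /eqP X1.
move/eqP: X2; rewrite eqr_div ?lt0r_neq0// => /eqP X2.
have H : (a - a') * C = 0.
  have -> : (a - a') * C = (a * (1 - g) * ((1 - a') * C) - a' * (1 - g') * ((1 - a) * C))
                          + (a * g * ((1 - a') * C) - a' * g' * ((1 - a) * C)) by ring.
  by rewrite X1 X2 !subrr addr0.
move/eqP: H; rewrite mulf_eq0 (negbTE (lt0r_neq0 C0)) orbF subr_eq0 => /eqP aa.
subst a'.
have H : (g - g') * (a * ((1 - a) * C)) = 0.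
  have -> : (g - g') * (a * ((1 - a) * C)) = a * g * ((1 - a) * C) - a * g' * ((1 - a) * C) by ring.
  by rewrite X2 subrr.
have Z : a * ((1 - a) * C) != 0 by rewrite lt0r_neq0 // mulr_gt0.
by move/eqP: H; rewrite mulf_eq0 (negbTE Z) orbF subr_eq0 => /eqP ->.
Qed.

Definition Bst (x : 'I_4 -> R) : R :=
  match pselect (exists th, beinf_param_space th /\ eta th = x) with
  | left H => - LB (proj1_sig (cid H))
  | right _ => 0
  end.

Lemma Bst_eta th : beinf_param_space th -> Bst (eta th) = - LB th.
Proof.
move=> Hth; rewrite /Bst; case: pselect => [H|[]]; last by exists th.
case: (cid H) => th' [Hth' E] /=.
by rewrite (eta_inj Hth' Hth E).
Qed.


Lemma dens th y : beinf_param_space th -> [set` `[0%R, 1%R]] y ->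
  beinf y th = expR (dotv (eta th) (Tst y) - Bst (eta th)) * hh y.
Proof.
move=> Hth; rewrite (Bst_eta Hth) opprK.
case: th Hth => [[[a g] m] p] [/andP[a0 a1] /andP[g0 g1] /andP[m0 m1] p0].
rewrite /= in_itv/= => /andP[y0 y1].
have C0 : 0 < Cf m p by apply: Cf_gt0 => //; rewrite m0 m1.
have K0 : 0 < (1 - a) * Cf m p by rewrite mulr_gt0 ?subr_gt0.
rewrite dot4 /eta /Tst !nth_inord //= /hh /LB.
have e01 : ((0 : R) == 1) = false by rewrite eq_sym oner_eq0.
have [->|yn0] := eqVneq y 0.
  rewrite /beinf ?eqxx e01 (@ln0 _ 0) // subr0 ln1.
  transitivity (expR (ln (a * (1 - g))) * expR 0).
    by rewrite lnK ?expR0 ?mulr1 // posrE mulr_gt0 ?subr_gt0.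
  by congr (expR _ * expR _); rewrite /=; ring.
have [->|yn1] := eqVneq y 1.
  rewrite /beinf ?oner_eq0 ?eqxx subrr (@ln0 _ 0) // ln1.
  transitivity (expR (ln (a * g)) * expR 0).
    by rewrite lnK ?expR0 ?mulr1 // posrE mulr_gt0.
  by congr (expR _ * expR _); rewrite /=; ring.
have y0' : 0 < y by rewrite lt_neqAle eq_sym yn0 y0.
have y1' : y < 1 by rewrite lt_neqAle yn1 y1.
have y1'' : 0 < 1 - y by rewrite subr_gt0.
rewrite /beinf y0' y1' /= /beta_dens -/(Cf m p).
rewrite /powR (gt_eqF y0') (gt_eqF y1'').
transitivity (expR (ln ((1 - a) * Cf m p)) * expR ((m * p - 1) * ln y) *
              expR (((1 - m) * p - 1) * ln (1 - y))).
  by rewrite lnK ?posrE // !mulrA.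
by rewrite -!expRD; congr expR; ring.
Qed.


Lemma alg1 (C E1 E2 : R) : 0 < C -> 0 < E1 -> 0 < E2 ->
  (C * E1 + C * E2) / (1 + (C * E1 + C * E2)) * (1 - C * E2 / (C * E1 + C * E2)) /
  ((1 - (C * E1 + C * E2) / (1 + (C * E1 + C * E2))) * C) = E1.
Proof.
move=> C0 E10 E20.
have U0 : 0 < C * E1 + C * E2 by rewrite addr_gt0 ?mulr_gt0.
have U1 : 0 < 1 + (C * E1 + C * E2) by rewrite addr_gt0.
field.
by rewrite addrK oner_neq0 !lt0r_neq0.
Qed.
Lemma alg2 (C E1 E2 : R) : 0 < C -> 0 < E1 -> 0 < E2 ->
  (C * E1 + C * E2) / (1 + (C * E1 + C * E2)) * (C * E2 / (C * E1 + C * E2)) /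
  ((1 - (C * E1 + C * E2) / (1 + (C * E1 + C * E2))) * C) = E2.
Proof.
move=> C0 E10 E20.
have U0 : 0 < C * E1 + C * E2 by rewrite addr_gt0 ?mulr_gt0.
have U1 : 0 < 1 + (C * E1 + C * E2) by rewrite addr_gt0.
field.
by rewrite addrK oner_neq0 !lt0r_neq0.
Qed.

Lemma surj (x : 'I_4 -> R) : (forall i, 1 < x i) ->
  exists2 th, beinf_param_space th & eta th = x.
Proof.
move=> Hx.
have h1 := Hx (inord 0); have h2 := Hx (inord 1).
have h3 := Hx (inord 2); have h4 := Hx (inord 3).
set x1 := x (inord 0) in h1 *; set x2 := x (inord 1) in h2 *.
set x3 := x (inord 2) in h3 *; set x4 := x (inord 3) in h4 *.
pose p := x3 + x4.
have p0 : 0 < p by rewrite /p; lra.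
pose m := x3 / p.
have m0 : 0 < m by rewrite /m divr_gt0//; lra.
have m1 : m < 1 by rewrite /m ltr_pdivrMr// mul1r /p; lra.
pose C := Cf m p.
have C0 : 0 < C by apply: Cf_gt0 => //; rewrite m0 m1.
pose u1 := C * expR x1; pose u2 := C * expR x2.
have u10 : 0 < u1 by rewrite mulr_gt0 ?expR_gt0.
have u20 : 0 < u2 by rewrite mulr_gt0 ?expR_gt0.
pose U := u1 + u2.
have U0 : 0 < U by rewrite /U addr_gt0.
pose a := U / (1 + U); pose g := u2 / U.
have a0 : 0 < a by rewrite /a divr_gt0// addr_gt0.
have a1 : a < 1 by rewrite /a ltr_pdivrMr ?addr_gt0// mul1r ltrDr.
have g0 : 0 < g by rewrite /g divr_gt0.
have g1 : g < 1 by rewrite /g ltr_pdivrMr// mul1r /U ltrDr.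
exists (a, g, m, p).
  by rewrite /beinf_param_space /=; split => //; apply/andP; split.
have U1 : 1 + U != 0 by rewrite lt0r_neq0 // addr_gt0.
have Un : U != 0 by rewrite lt0r_neq0.
have Cn : C != 0 by rewrite lt0r_neq0.
have pn : p != 0 by rewrite lt0r_neq0.
have K0 : 0 < (1 - a) * C by rewrite mulr_gt0 ?subr_gt0.
apply: eq4 => k k4; rewrite /eta nth_inord //.
case: k k4 => [|[|[|[|k]]]] // _ /=.
- have A1 : 0 < a * (1 - g) by rewrite mulr_gt0 ?subr_gt0.
  apply: expR_inj; rewrite expR_lnB // -/C -/x1.
  by rewrite /a /g /U /u1 /u2 alg1 // expR_gt0.
- have A1 : 0 < a * g by rewrite mulr_gt0.
  apply: expR_inj; rewrite expR_lnB // -/C -/x2.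
  by rewrite /a /g /U /u1 /u2 alg2 // expR_gt0.
- by rewrite /m -/x3 divfK.
- by rewrite /m mulrBl mul1r divfK // /p -/x3 -/x4 addrC addKr.
Qed.


Lemma cont_lin (k2 k3 y0 : R) : 0 < y0 < 1 ->
  {for y0, continuous (fun y => k2 * ln y + k3 * ln (1 - y))}.
Proof.
move=> /andP[h0 h1].
apply: cvgD.
  by apply: cvgM; [exact: cvg_cst | exact: continuous_ln].
apply: cvgM; first exact: cvg_cst.
have c2 : {for y0, continuous (@ln R \o (fun y => 1 - y))}.
  apply: continuous_comp.
    by apply: cvgB; [exact: cvg_cst | exact: cvg_id].
  by apply: continuous_ln; rewrite subr_gt0.
exact: c2.
Qed.

Lemma Tconstr (a : 'I_4 -> R) (c : R) :
  {ae @nu R, forall y, [set` `[0%R, 1%R]] y -> dotv a (Tst y) = c} ->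
  a = (fun=> 0).
Proof.
move=> H; have [f0 f1 fint] := ae_nu_01 H.
have e01 : ((0 : R) == 1) = false by rewrite eq_sym oner_eq0.
move: f0 f1; rewrite !dot4 /Tst !nth_inord //= eqxx e01 oner_eq0 subrr subr0.
rewrite !(@ln0 _ 0) // ln1 !mulr0 !mulr1 !addr0.
rewrite add0r => A0 A1.
set a2 := a (inord 2); set a3 := a (inord 3).
have Fy y : 0 < y < 1 -> a2 * ln y + a3 * ln (1 - y) = c.
  move=> hy; apply: (fint y hy (fun y => a2 * ln y + a3 * ln (1 - y))).
    exact: cont_lin.
  move=> z /andP[z0 z1]; rewrite dot4 /Tst !nth_inord //=.
  by rewrite gt_eqF // lt_eqF // !mulr0 !add0r.
have hq : (4 : R) * 4^-1 = 1 by rewrite mulfV.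
have hh2 : (2 : R) * 2^-1 = 1 by rewrite mulfV.
have q0 : (0 : R) < 4^-1 by rewrite invr_gt0.
have t0 : (0 : R) < 2^-1 by rewrite invr_gt0.
have E1 := Fy 4^-1 ltac:(apply/andP; split; lra).
have E2 := Fy (1 - 4^-1) ltac:(apply/andP; split; lra).
have E3 := Fy 2^-1 ltac:(apply/andP; split; lra).
rewrite (_ : 1 - (1 - 4^-1) = 4^-1) in E2; last by lra.
rewrite (_ : 1 - 2^-1 = 2^-1) in E3; last by lra.
set L1 := ln 4^-1 in E1 E2; set L3 := ln (1 - 4^-1) in E1 E2; set L2 := ln 2^-1 in E3.
have L12 : L1 = L2 + L2.
  by rewrite /L1 /L2 -lnM ?posrE // -invfM (_ : (2 : R) * 2 = 4) //; lra.
have L2n : L2 < 0 by rewrite /L2 ln_lt0 //; apply/andP; split; lra.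
have L3n : L3 < 0 by rewrite /L3 ln_lt0 //; apply/andP; split; lra.
have L13 : L1 < L3 by rewrite /L1 /L3 ltr_ln ?posrE; lra.
have H1 : (a2 - a3) * (L1 - L3) = 0.
  have -> : (a2 - a3) * (L1 - L3) = (a2 * L1 + a3 * L3) - (a2 * L3 + a3 * L1) by ring.
  by rewrite E1 E2 subrr.
move/eqP: H1; rewrite mulf_eq0 subr_eq0 (_ : (L1 - L3 == 0) = false) ?orbF; last first.
  by apply/negbTE; rewrite subr_eq0 lt_eqF.
move=> /eqP a23.
have H2 : a2 * L3 = 0.
  have -> : a2 * L3 = (a2 * L1 + a3 * L3) - (a2 * L2 + a3 * L2) + (a2 - a3) * L3.
    by rewrite a23 L12; ring.
  by rewrite E1 E3 subrr a23 subrr mul0r addr0.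
move/eqP: H2; rewrite mulf_eq0 (lt_eqF L3n) orbF => /eqP a20.
have c0 : c = 0 by rewrite -E3 -a23 a20 !mul0r addr0.
apply: eq4 => k k4; case: k k4 => [|[|[|[|k]]]] // _.
- by rewrite A0 c0.
- by move: A1; rewrite eqxx mulr1 c0.
- by rewrite -/a3 -a23 a20.
Qed.

Lemma etaconstr (a : 'I_4 -> R) (c : R) :
  (forall th, beinf_param_space th -> dotv a (eta th) = c) -> a = (fun=> 0).
Proof.
move=> H.
have Hx x : (forall i, 1 < x i) -> dotv a x = c.
  move=> Hx'; have [th Hth E] := surj Hx'; rewrite -E; exact: H.
have H0 : dotv a (fun=> 2) = c by apply: Hx => _; lra.
pose v (k : nat) : 'I_4 -> R := fun i => if val i == k then 3 else 2.
have Hv k : dotv a (v k) = c.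
  apply: Hx => i; rewrite /v; case: ifP => _; lra.
move: H0; rewrite dot4 => H0.
apply: eq4 => k k4; move: (Hv k); rewrite dot4 /v /= !inordK //=.
case: k k4 => [|[|[|[|k]]]] // _ /= => h; lra.
Qed.

Lemma box : exists lo hi : 'I_4 -> R, (forall i, lo i < hi i) /\
  (forall x : 'I_4 -> R, (forall i, lo i < x i < hi i) ->
     exists2 th, beinf_param_space th & eta th = x).
Proof.
exists (fun=> 1), (fun=> 4); split => [i|x Hx]; first lra.
by apply: surj => i; have /andP[] := Hx i.
Qed.

End main.

Theorem proposition2 (R : realType) :
  exp_family_full_rank (@nu R) `[0%R, 1%R] (@beinf_param_space R)
    (fun th y => beinf y th) 4.
Proof.
exists eta, Tst, Bst, hh.
split; first exact: eta_inj.
split; first by move=> y _; exact: expR_gt0.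
split; first by move=> th y Hth Hy; exact: dens.
split; first by move=> a c; exact: Tconstr.
split; first by move=> a c; exact: etaconstr.
exact: box.
Qed.
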